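(* For every $w\in\mathfrak B$, $$\langle\nabla R(w),\,w-w^\star\rangle\ge\frac1{10}\|w-w^\star\|^2.$$
   Context: $\|w^\star\|=1$. $R$ is the population risk of learning a ReLU unit, whose gradient at $w\ne0$ is $\nabla R(w)=\frac12(w-w^\star)+\frac1{2\pi}(\theta w^\star-\hat w\sin\theta)$, where $\hat w=w/\|w\|$ and $\theta\in[0,\pi]$ is the angle between $w$ and $w^\star$ ($\cos\theta=\hat w^\top w^\star$). $\mathfrak B=\{w:w^\top w^\star\ge1/\sqrt d\}\cap\{w:\|w\|\le2\}$. *)

(* Defs.v *)
(* real vectors in R^d represented as functions nat -> R,
   of which only coordinates 0..d-1 are ever used. *)
From Stdlib Require Import Reals Lra.
Open Scope R_scope.

Definition vec := nat -> R.

Fixpoint sumn (n : nat) (f : nat -> R) : R :=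
  match n with
  | O => 0
  | S k => sumn k f + f k
  end.

Definition dot (d : nat) (u v : vec) : R := sumn d (fun i => u i * v i).
Definition norm (d : nat) (u : vec) : R := sqrt (dot d u u).

Definition vsub (u v : vec) : vec := fun i => u i - v i.

(* angle theta in [0, pi] between w and ws: cos theta = (w/|w|) . ws  (|ws| = 1) *)
Definition angle (d : nat) (w ws : vec) : R := acos (dot d w ws / norm d w).

(* gradient of the population risk of a ReLU unit, at w <> 0:
   grad R(w) = 1/2 (w - ws) + 1/(2 pi) (theta ws - (w/|w|) sin theta) *)
Definition gradR (d : nat) (ws w : vec) : vec :=
  let th := angle d w ws in
  fun i => / 2 * (w i - ws i)
           + / (2 * PI) * (th * ws i - (w i / norm d w) * sin th).

Definition inB (d : nat) (ws w : vec) : Prop :=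
  dot d w ws >= / sqrt (INR d) /\ norm d w <= 2.

(* Main.v *)
Require Import Defs.
From Stdlib Require Import Reals Lra Lia.
Open Scope R_scope.

Lemma sumn_ext n f g : (forall i, f i = g i) -> sumn n f = sumn n g.
Proof. intro H; induction n; simpl; [reflexivity| rewrite IHn, H; reflexivity]. Qed.

Lemma sumn_nonneg n f : (forall i, 0 <= f i) -> 0 <= sumn n f.
Proof. intro H; induction n; simpl; [lra| specialize (H n); lra]. Qed.

Lemma sumn_lin n (x y : vec) p q u :
  sumn n (fun i => p * (x i * x i) + q * (x i * y i) + u * (y i * y i))
  = p * sumn n (fun i => x i * x i) + q * sumn n (fun i => x i * y i)
    + u * sumn n (fun i => y i * y i).
Proof. induction n; simpl; [ring| rewrite IHn; ring]. Qed.

Lemma sin_lb_eq a : sin_lb a = a - a^3/6 + a^5/120 - a^7/5040.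
Proof.
unfold sin_lb, sin_approx, sin_term. simpl sum_f_R0. simpl Factorial.fact. simpl INR. field.
Qed.

Lemma jordan th : 0 <= th -> th <= 2 -> th <= PI / 2 -> th <= 5/2 * sin th.
Proof.
intros H0 H2 H3.
assert (HPI: 3/2 < PI/2) by apply PI2_3_2.
destruct (SIN th H0 ltac:(lra)) as [Hl _].
rewrite sin_lb_eq in Hl.
set (x := th^2).
assert (Hx0 : 0 <= x) by (unfold x; nra).
assert (Hx4 : x <= 4) by (unfold x; nra).
assert (Hp : 0 <= 3/2 - 5*x/12 + x^2/48 - x^3/2016).
{ assert (0 <= (4 - x) * (16 - x)) by nra.
  assert (x^3 <= 64) by (simpl; nra). nra. }
assert (E : 5/2*(th - th^3/6 + th^5/120 - th^7/5040) - th
            = th * (3/2 - 5*x/12 + x^2/48 - x^3/2016)) by (unfold x; field).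
assert (0 <= th * (3/2 - 5*x/12 + x^2/48 - x^3/2016)) by (apply Rmult_le_pos; lra).
lra.
Qed.

Lemma key th s c r : 0 <= th <= PI/2 -> th <= 5/2 * s -> 0 <= s -> 0 <= c ->
  s^2 + c^2 = 1 ->
  th * (1 - r*c) + s * (r - c) <= 4/5 * PI * (r^2 - 2*r*c + 1).
Proof.
intros [H0 H1] Hj Hs Hc Hsc.
assert (HPI: 3/2 < PI/2) by apply PI2_3_2.
pose (t := r - c).
assert (Ef : th * (1 - r*c) + s * (r - c) = th * s^2 + (t*s - t*th*c)).
{ unfold t. replace (1 - r*c) with (s^2 + c^2 - r*c) by lra. ring. }
assert (ED : r^2 - 2*r*c + 1 = t^2 + s^2).
{ unfold t. replace 1 with (s^2+c^2) at 1 by lra. ring. }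
rewrite Ef, ED.
assert (Hc1 : c <= 1) by nra.
assert (H2 : t*s - t*th*c <= 5/2 * Rabs t * s).
{ destruct (Rle_dec 0 t) as [Ht|Ht].
  - rewrite Rabs_right by lra. assert (0 <= t*th*c) by (apply Rmult_le_pos; nra). nra.
  - rewrite Rabs_left by lra.
    assert (t*s <= 0) by nra.
    assert (th * c <= th) by nra.
    assert (- t * (th*c) <= - t * (5/2*s)) by (apply Rmult_le_compat_l; lra).
    nra. }
assert (H3 : th * s^2 <= PI/2 * s^2) by (apply Rmult_le_compat_r; nra).
assert (H4 : 5/2 * Rabs t * s <= 12/5 * t^2 + 9/10 * s^2).
{ assert (Ha2 : Rabs t ^2 = t^2) by (rewrite <- Rsqr_pow2, <- Rsqr_abs, Rsqr_pow2; reflexivity).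
  assert (0 <= Rabs t) by apply Rabs_pos.
  assert (0 <= (Rabs t - 25/48*s)^2) by apply pow2_ge_0.
  assert (E2 : 12/5 * t^2 + 9/10 * s^2 - 5/2 * Rabs t * s = 12/5 * (Rabs t - 25/48*s)^2 + (9/10 - 12/5*(25/48)^2) * s^2)
    by (rewrite <- Ha2; field).
  assert (0 <= s^2) by apply pow2_ge_0. nra. }
assert (H5 : 12/5 * t^2 + 9/10 * s^2 <= 4/5*PI*t^2 + 3/10*PI*s^2).
{ assert (0 <= t^2) by nra. assert (0 <= s^2) by apply pow2_ge_0. nra. }
nra.
Qed.

Theorem mainTheorem15 (d : nat) (ws w : vec) :
  norm d ws = 1 ->
  inB d ws w ->
  dot d (gradR d ws w) (vsub w ws) >= / 10 * (norm d (vsub w ws)) ^ 2.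
Proof.
intros Hws [HB Hr2].
set (A := dot d w w). set (B := dot d w ws). set (C := dot d ws ws).
assert (HC0 : 0 <= C) by (apply sumn_nonneg; intro; nra).
assert (HC : C = 1).
{ unfold norm in Hws. fold C in Hws. rewrite <- (sqrt_sqrt C HC0), Hws. ring. }
assert (HA0 : 0 <= A) by (apply sumn_nonneg; intro; nra).
assert (Hd : (0 < d)%nat).
{ destruct d; [|lia]. unfold C, dot in HC. simpl in HC. lra. }
assert (HsqD : 0 < sqrt (INR d)) by (apply sqrt_lt_R0; apply lt_0_INR; exact Hd).
change (B >= / sqrt (INR d)) in HB. assert (HBpos : 0 < B).
{ assert (0 < / sqrt (INR d)) by (apply Rinv_0_lt_compat; exact HsqD). lra. }
assert (HCS : B^2 <= A).
{ assert (H := sumn_nonneg d (fun i => (w i - B * ws i) * (w i - B * ws i))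
     ltac:(intro; apply Rle_0_sqr)).
  rewrite (sumn_ext d _ (fun i => 1 * (w i * w i) + (-2*B) * (w i * ws i) + (B^2) * (ws i * ws i)))
    in H by (intro; ring).
  rewrite sumn_lin in H. change (sumn d (fun i => w i * w i)) with A in H; change (sumn d (fun i => w i * ws i)) with B in H; change (sumn d (fun i => ws i * ws i)) with C in H. rewrite HC in H. nra. }
set (r := norm d w).
assert (Hr : r = sqrt A) by reflexivity.
assert (HrA : r^2 = A) by (rewrite Hr; rewrite <- Rsqr_pow2; apply Rsqr_sqrt; lra).
assert (Hrpos : 0 < r) by (rewrite Hr; apply sqrt_lt_R0; nra).
assert (HBr : B <= r) by nra.
set (c := B / r).
assert (Hc0 : 0 < c) by (unfold c; apply Rdiv_lt_0_compat; lra).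
assert (Hc1 : c <= 1) by (unfold c; apply (Rmult_le_reg_r r); [lra|]; unfold Rdiv; rewrite Rmult_assoc, Rinv_l by lra; lra).
assert (HBc : B = r * c) by (unfold c; field; lra).
set (th := angle d w ws).
assert (Hth : th = acos c) by reflexivity.
assert (Hcos : cos th = c) by (rewrite Hth; apply cos_acos; lra).
set (s := sin th).
assert (Hthb := acos_bound c). rewrite <- Hth in Hthb.
assert (Hs0 : 0 <= s) by (apply sin_ge_0; lra).
assert (Hsc : s^2 + c^2 = 1) by (rewrite <- Hcos; unfold s; pose proof (sin2_cos2 th) as Hq; rewrite !Rsqr_pow2 in Hq; exact Hq).
assert (HPI: 3/2 < PI/2) by apply PI2_3_2.
assert (HPI4 := PI_4).
assert (Hth2 : th <= PI/2).
{ destruct (Rle_dec th (PI/2)) as [h|h]; [exact h|].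
  exfalso. destruct (Req_dec th PI) as [e|e].
  - rewrite e, cos_PI in Hcos. lra.
  - assert (cos th < 0) by (apply cos_lt_0; lra). lra. }
assert (Hj : th <= 5/2 * s) by (apply jordan; lra).
assert (Hkey := key th s c r (conj (proj1 Hthb) Hth2) Hj Hs0 ltac:(lra) Hsc).
assert (Eg : dot d (gradR d ws w) (vsub w ws) =
   (/2 - s / (2*PI*r)) * A + (-1 + /(2*PI) * (th + s/r)) * B + (/2 - th/(2*PI)) * C).
{ change A with (sumn d (fun i => w i * w i)); change B with (sumn d (fun i => w i * ws i)); change C with (sumn d (fun i => ws i * ws i)).
  unfold dot, gradR, vsub. fold r th s.
  rewrite <- sumn_lin. apply sumn_ext. intro i. field. split; lra. }
assert (En : norm d (vsub w ws) ^ 2 = A - 2*B + C).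
{ unfold norm. rewrite <- Rsqr_pow2, Rsqr_sqrt.
  - unfold dot, vsub. rewrite (sumn_ext d _ (fun i => 1 * (w i * w i) + (-2) * (w i * ws i) + 1 * (ws i * ws i))) by (intro; ring).
    rewrite sumn_lin. change (sumn d (fun i => w i * w i)) with A; change (sumn d (fun i => w i * ws i)) with B; change (sumn d (fun i => ws i * ws i)) with C. ring.
  - apply sumn_nonneg; intro; nra. }
rewrite Eg, En, HC, <- HrA, HBc.
assert (E : (/2 - s / (2*PI*r)) * r^2 + (-1 + /(2*PI) * (th + s/r)) * (r*c) + (/2 - th/(2*PI)) * 1
   - / 10 * (r^2 - 2*(r*c) + 1)
   = / (2*PI) * (4/5*PI*(r^2 - 2*r*c + 1) - (th * (1 - r*c) + s * (r - c)))) by (field; split; lra).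
assert (0 <= / (2*PI) * (4/5*PI*(r^2 - 2*r*c + 1) - (th * (1 - r*c) + s * (r - c)))).
{ apply Rmult_le_pos; [left; apply Rinv_0_lt_compat; lra| lra]. }
lra.
Qed.
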